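(* Let $k$ be a commutative ring containing $1/2$, let $R$ be a smooth commutative $k$-algebra such that $\mathrm{Der}_k(R)$ is free with a basis $\tau_1,\dots,\tau_n$ of pairwise commuting derivations, and let $g=(g^{ij})\in GL_n(R)$ be such that the derivations $\tau'_i=g^{ij}\tau_j$ pairwise commute. Let $A=(g^{-1})^{t}$, i.e. $A^{\alpha\beta}=(g^{-1})^{\beta\alpha}$ (the matrix expressing the basis of $1$-forms dual to $(\tau'_i)$ in terms of the basis dual to $(\tau_i)$). With summation over repeated indices define $$h_\Omega^{ij}=\tau_p\tau_j(g^{ip})+\tfrac12\,\tau_q(g^{ip})\,\tau_p(g^{rq})\,(g^{-1})^{jr},$$ $$g^{i\alpha\gamma}=g^{iq}\tau_q\big((A^{-1})^{\alpha\mu}\big)A^{\mu\gamma},\qquad h_E^{ij}=\tau_j(g^{i\nu\nu})+\tfrac12\,g^{iq}\tau_j\big((A^{-1})^{\mu\beta}\big)A^{\beta\gamma}\tau_q\big((A^{-1})^{\gamma\nu}\big)A^{\nu\mu}.$$ Then $h^{ij}:=h_\Omega^{ij}-h_E^{ij}=0$ for all $i,j$.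
   Context: $(g^{-1})^{jr}$ is the $(j,r)$ entry of $g^{-1}$. Repeated indices are summed. *)

(* Defs.v *)
From HB Require Import structures.
From mathcomp Require Import all_boot all_order all_algebra.
From mathcomp Require Import mpoly.
Set Implicit Arguments. Unset Strict Implicit. Unset Printing Implicit Defensive.
Import GRing.Theory.
Local Open Scope ring_scope.

Definition kalg_hom (k : comNzRingType) (A B : comAlgType k) (f : A -> B) : Prop :=
  [/\ (forall x y, f (x + y) = f x + f y),
      (forall x y, f (x * y) = f x * f y),
      f 1 = 1 &
      (forall (c : k) x, f (c *: x) = c *: f x)].

(* Formal smoothness: lifting property along surjections with square-zero
   kernel (C plays the role of B/I with I^2 = 0). *)
Definition formally_smooth (k : comNzRingType) (R : comAlgType k) : Prop :=
  forall (B C : comAlgType k) (pi : B -> C),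
    kalg_hom pi -> (forall c, exists b, pi b = c) ->
    (forall x y, pi x = 0 -> pi y = 0 -> x * y = 0) ->
    forall f : R -> C, kalg_hom f ->
      exists f' : R -> B, kalg_hom f' /\ (forall r, pi (f' r) = f r).

Definition finitely_presented (k : comNzRingType) (R : comAlgType k) : Prop :=
  exists (m : nat) (phi : {mpoly k[m]} -> R) (s : seq {mpoly k[m]}),
    [/\ kalg_hom phi,
        (forall r, exists p, phi p = r) &
        (forall p, phi p = 0 <->
           exists c : 'I_(size s) -> {mpoly k[m]},
             p = \sum_(i < size s) c i * s`_i)].

Definition smooth (k : comNzRingType) (R : comAlgType k) : Prop :=
  finitely_presented R /\ formally_smooth R.

Definition is_derivation (k : comNzRingType) (R : comAlgType k) (D : R -> R) : Prop :=
  [/\ (forall x y, D (x + y) = D x + D y),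
      (forall (c : k) x, D (c *: x) = c *: D x) &
      (forall x y, D (x * y) = D x * y + x * D y)].

Definition tau' (k : comNzRingType) (R : comAlgType k) (n : nat)
  (tau : 'I_n -> R -> R) (g : 'M[R]_n) (i : 'I_n) : R -> R :=
  fun x => \sum_(j < n) g i j * tau j x.

Definition h_Omega (k : comNzRingType) (half : k) (R : comAlgType k) (n : nat)
  (tau : 'I_n -> R -> R) (g ginv : 'M[R]_n) (i j : 'I_n) : R :=
  \sum_(p < n) tau p (tau j (g i p))
  + half *: (\sum_(p < n) \sum_(q < n) \sum_(r < n)
               tau q (g i p) * tau p (g r q) * ginv j r).

Definition g3 (k : comNzRingType) (R : comAlgType k) (n : nat)
  (tau : 'I_n -> R -> R) (g A Ainv : 'M[R]_n) (i al ga : 'I_n) : R :=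
  \sum_(q < n) \sum_(mu < n) g i q * tau q (Ainv al mu) * A mu ga.

Definition h_E (k : comNzRingType) (half : k) (R : comAlgType k) (n : nat)
  (tau : 'I_n -> R -> R) (g A Ainv : 'M[R]_n) (i j : 'I_n) : R :=
  \sum_(nu < n) tau j (g3 tau g A Ainv i nu nu)
  + half *: (\sum_(q < n) \sum_(mu < n) \sum_(be < n) \sum_(ga < n) \sum_(nu < n)
       g i q * tau j (Ainv mu be) * A be ga * tau q (Ainv ga nu) * A nu mu).

(* Main.v *)
Require Import Defs.
From HB Require Import structures.
From mathcomp Require Import all_boot all_order all_algebra.
From mathcomp Require Import mpoly.
From mathcomp Require Import ring.
Import GRing.Theory.
Local Open Scope ring_scope.

Lemma der_sum (k : comNzRingType) (R : comAlgType k) (D : R -> R)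
  (HD : is_derivation D) (I : Type) (r : seq I) (P : pred I) (F : I -> R) :
  D (\sum_(i <- r | P i) F i) = \sum_(i <- r | P i) D (F i).
Proof.
case: HD => Hadd _ _.
have D0 : D 0 = 0.
  have h := Hadd 0 0; rewrite addr0 in h.
  by apply: (addrI (D 0)); rewrite -h addr0.
exact: (big_morph D Hadd D0).
Qed.

Lemma der_mul (k : comNzRingType) (R : comAlgType k) (D : R -> R)
  (HD : is_derivation D) x y : D (x * y) = D x * y + x * D y.
Proof. by case: HD. Qed.
Arguments der_mul {k R D} HD x y.
Arguments der_sum {k R D} HD {I} r P F.

Lemma tau'_expand (k : comNzRingType) (R : comAlgType k) (n : nat)
  (tau : 'I_n -> R -> R) (Htau_der : forall i, is_derivation (tau i))
  (g : 'M[R]_n) i j x :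
  tau' tau g i (tau' tau g j x) =
  \sum_(c < n) (\sum_(a < n) g i a * tau a (g j c)) * tau c x
  + \sum_(a < n) \sum_(b < n) g i a * g j b * tau a (tau b x).
Proof.
rewrite /tau'.
under eq_bigr => a _.
  rewrite der_sum //.
  under eq_bigr => b _ do rewrite (der_mul (Htau_der a)).
  rewrite big_distrr /=.
  over.
rewrite /=.
under eq_bigr => a _ do under eq_bigr => b _ do rewrite mulrDr.
under eq_bigr => a _ do rewrite big_split /=.
rewrite big_split /=; congr (_ + _).
  rewrite exchange_big /=; apply: eq_bigr => c _.
  by rewrite big_distrl /=; apply: eq_bigr => a _; rewrite mulrA.
by apply: eq_bigr => a _; apply: eq_bigr => b _; ring.
Qed.

Lemma symC (k : comNzRingType) (R : comAlgType k) (n : nat)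
  (tau : 'I_n -> R -> R) (Htau_der : forall i, is_derivation (tau i))
  (Htau_indep : forall c : 'I_n -> R,
     (forall x, \sum_(q < n) c q * tau q x = 0) -> forall q, c q = 0)
  (Htau_comm : forall i j x, tau i (tau j x) = tau j (tau i x))
  (g : 'M[R]_n)
  (Htau'_comm : forall i j x,
     tau' tau g i (tau' tau g j x) = tau' tau g j (tau' tau g i x)) :
  forall i j c, \sum_(a < n) g i a * tau a (g j c) = \sum_(a < n) g j a * tau a (g i c).
Proof.
move=> i j c; apply/eqP; rewrite -subr_eq0; apply/eqP.
apply: (Htau_indep (fun c => \sum_(a < n) g i a * tau a (g j c) - \sum_(a < n) g j a * tau a (g i c))) => x.
have h := Htau'_comm i j x; rewrite !tau'_expand // in h.
have E : \sum_(a < n) \sum_(b < n) g j a * g i b * tau a (tau b x) =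
          \sum_(a < n) \sum_(b < n) g i a * g j b * tau a (tau b x).
  rewrite exchange_big /=; apply eq_bigr => a _; apply eq_bigr => b _.
  by rewrite Htau_comm [g j b * _]mulrC.
rewrite E in h; move/addIr: h => h.
under eq_bigr => q _ do rewrite mulrBl.
by rewrite sumrB h subrr.
Qed.
Arguments symC {k R n tau} Htau_der Htau_indep Htau_comm {g} Htau'_comm.

Lemma sum_kron (R : comNzRingType) n (F : 'I_n -> R) a :
  \sum_(b < n) (a == b)%:R * F b = F a.
Proof.
rewrite (bigD1 a) //= eqxx mul1r big1 ?addr0 // => b /negbTE.
by rewrite eq_sym => ->; rewrite mul0r.
Qed.

Lemma kron_expand (R : comNzRingType) n (G g : 'M[R]_n)
  (HG : forall a b, \sum_(i < n) G a i * g i b = (a == b)%:R) (t : 'I_n -> R) p :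
  t p = \sum_(i < n) G p i * \sum_(a < n) g i a * t a.
Proof.
under eq_bigr => i _ do rewrite big_distrr /=.
rewrite exchange_big /= -[LHS](sum_kron _ _ t p).
apply eq_bigr => a _; rewrite -HG big_distrl /=.
by apply eq_bigr => i _; rewrite mulrA.
Qed.
Arguments kron_expand {R n G g} HG t p.

Lemma Ysym (R : comNzRingType) n (G g : 'M[R]_n) (tau : 'I_n -> R -> R)
  (HG : forall a b, \sum_(i < n) G a i * g i b = (a == b)%:R)
  (HC : forall i j c, \sum_(a < n) g i a * tau a (g j c) = \sum_(a < n) g j a * tau a (g i c))
  j p q :
  \sum_(r < n) G j r * tau p (g r q) = \sum_(r < n) G p r * tau j (g r q).
Proof.
have E : forall p r, tau p (g r q) = \sum_(i < n) G p i * \sum_(a < n) g r a * tau a (g i q).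
  move=> p' r; rewrite (kron_expand HG (fun a => tau a (g r q)) p').
  by apply eq_bigr => i _; rewrite HC.
under eq_bigr => r _ do rewrite E big_distrr /=.
under [RHS]eq_bigr => r _ do rewrite E big_distrr /=.
rewrite [RHS]exchange_big /=; apply eq_bigr => r _; apply eq_bigr => i _.
by rewrite HC; ring.
Qed.
Arguments Ysym {R n G g tau} HG HC j p q.

Theorem theorem6p4
  (k : comNzRingType) (half : k) (Hhalf : half *+ 2 = 1)
  (R : comAlgType k) (HRsmooth : smooth R)
  (n : nat) (tau : 'I_n -> R -> R)
  (Htau_der : forall i, is_derivation (tau i))
  (Htau_span : forall D : R -> R, is_derivation D ->
     exists c : 'I_n -> R, forall x, D x = \sum_(q < n) c q * tau q x)
  (Htau_indep : forall c : 'I_n -> R,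
     (forall x, \sum_(q < n) c q * tau q x = 0) -> forall q, c q = 0)
  (Htau_comm : forall i j x, tau i (tau j x) = tau j (tau i x))
  (g ginv : 'M[R]_n) (Hginv_r : g *m ginv = 1%:M) (Hginv_l : ginv *m g = 1%:M)
  (Htau'_comm : forall i j x,
     tau' tau g i (tau' tau g j x) = tau' tau g j (tau' tau g i x))
  (A Ainv : 'M[R]_n) (HA : A = ginv^T)
  (HAinv_r : A *m Ainv = 1%:M) (HAinv_l : Ainv *m A = 1%:M) :
  forall i j : 'I_n,
    h_Omega half tau g ginv i j - h_E half tau g A Ainv i j = 0.
Proof.
have AgT : A *m g^T = 1%:M by rewrite HA -trmx_mul Hginv_r trmx1.
have HAi : Ainv = g^T by rewrite -[Ainv]mulmx1 -AgT mulmxA HAinv_l mul1mx.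
have HG : forall a b, \sum_(i < n) ginv a i * g i b = (a == b)%:R.
  move=> a b; have := congr1 (fun M : 'M[R]_n => M a b) Hginv_l.
  by rewrite !mxE.
have HC := symC Htau_der Htau_indep Htau_comm Htau'_comm.
move=> i j.
rewrite /h_Omega /h_E /g3 HAi HA.
have L1 : \sum_(nu < n) \sum_(q < n) \sum_(mu < n) g i q * tau q (g mu nu) * ginv nu mu
    = \sum_(a < n) tau a (g i a).
  transitivity (\sum_(nu < n) \sum_(mu < n)
      (\sum_(q < n) g i q * tau q (g mu nu)) * ginv nu mu).
    apply eq_bigr => nu _; rewrite exchange_big /=; apply eq_bigr => mu _.
    by rewrite big_distrl.
  under eq_bigr => nu _ do under eq_bigr => mu _ do rewrite HC big_distrl /=.
  apply eq_bigr => nu _; rewrite exchange_big /=.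
  rewrite -[RHS](sum_kron _ _ (fun q => tau q (g i nu)) nu).
  apply eq_bigr => q _; rewrite -HG big_distrl /=.
  by apply eq_bigr => mu _; ring.
have P1 : \sum_(nu < n) tau j
        (\sum_(q < n) \sum_(mu < n) g i q * tau q (g^T nu mu) * ginv^T mu nu)
     = \sum_(p < n) tau p (tau j (g i p)).
  rewrite -(der_sum (Htau_der j)).
  transitivity (tau j (\sum_(a < n) tau a (g i a))); last first.
    by rewrite (der_sum (Htau_der j)); apply eq_bigr => a _; rewrite Htau_comm.
  rewrite -L1; congr (tau j _); apply eq_bigr => nu _; apply eq_bigr => q _.
  by apply eq_bigr => mu _; rewrite !mxE.
have P2 : \sum_(q < n) \sum_(mu < n) \sum_(be < n) \sum_(ga < n) \sum_(nu < n)
                  g i q * tau j (g^T mu be) * ginv^T be ga *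
                  tau q (g^T ga nu) * ginv^T nu mu
    = \sum_(p < n) \sum_(q < n) \sum_(r < n) tau q (g i p) * tau p (g r q) * ginv j r.
  have K : forall mu ga, \sum_(q < n) \sum_(nu < n) g i q * tau q (g nu ga) * ginv mu nu
                      = tau mu (g i ga).
    move=> mu ga; rewrite exchange_big /=.
    rewrite (kron_expand HG (fun a => tau a (g i ga)) mu).
    apply eq_bigr => nu _; rewrite -HC big_distrr /=.
    by apply eq_bigr => q _; ring.
  transitivity (\sum_(mu < n) \sum_(be < n) \sum_(ga < n)
      tau mu (g i ga) * (tau j (g be mu) * ginv ga be)).
    transitivity (\sum_(q < n) \sum_(mu < n) \sum_(be < n) \sum_(ga < n) \sum_(nu < n)
                  g i q * tau j (g be mu) * ginv ga be * tau q (g nu ga) * ginv mu nu).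
      do 5! (apply eq_bigr => ? _); by rewrite !mxE.
    rewrite exchange_big /=; apply eq_bigr => mu _.
    rewrite exchange_big /=; apply eq_bigr => be _.
    rewrite exchange_big /=; apply eq_bigr => ga _.
    rewrite -K big_distrl /=; apply eq_bigr => q _.
    rewrite big_distrl /=; apply eq_bigr => nu _; ring.
  symmetry.
  transitivity (\sum_(p < n) \sum_(q < n) tau q (g i p) * \sum_(r < n) ginv p r * tau j (g r q)).
    apply eq_bigr => p _; apply eq_bigr => q _.
    rewrite -(Ysym HG HC) big_distrr /=; apply eq_bigr => r _; ring.
  rewrite exchange_big /=; apply eq_bigr => mu _.
  under eq_bigr => p _ do rewrite big_distrr /=.
  rewrite exchange_big /=; apply eq_bigr => be _.
  apply eq_bigr => ga _; ring.
by rewrite P1 P2 subrr.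
Qed.
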